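(* For each $1\le i\le4$, the natural action of $PGL(W)\times PGL(R)$ on $\mathbf F_i$ is free on a nonempty open subset of $\mathbf F_i$.
   Context: Over $\mathbb C$, $V=H^0\mathcal O_{\mathbb P^3}(1)$, $\check V$ its dual, $R$ and $W$ vector spaces of dimensions $3$ and $4$, $\mathbf T=\mathbb P(\mathrm{Hom}(R\otimes V,W))$. $\mathbf F\subset\mathbf T\times\mathbb P(\mathrm{Hom}(W,\check V))\times\mathbb P(\mathrm{Hom}(\check V,W))$ is the subvariety of triples $(\varphi,\psi,\psi')$ such that the composite $R\otimes V\otimes V\to W\otimes V\to\check V\otimes V\to\mathbb C$ induced by $\varphi,\psi$ factors through $R\otimes S^2V$, the composite $R\otimes\check W\otimes\check W\to\check V\otimes\check W\to W\otimes\check W\to\mathbb C$ induced by $\varphi,\psi'$ factors through $R\otimes S^2\check W$, and $\psi'\psi=\lambda1_W$, $\psi\psi'=\mu1_{\check V}$ for some scalars. $\mathbf F_i$ ($1\le i\le3$) is the subset where $\mathrm{rk}\,\psi=i$, $\mathrm{rk}\,\psi'=4-i$; $\mathbf F_4$ is the open subset where $\psi$ is invertible. $PGL(R)$ acts by precomposition on $\varphi$, $PGL(W)$ by composition on $\varphi$, $\psi$ (via inverse) and $\psi'$. *)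

(* Defs.v *)
From HB Require Import structures.
From mathcomp Require Import all_boot all_order all_algebra.
From mathcomp Require Import reals.
From mathcomp Require Import complex.
From mathcomp Require mpoly.
Set Implicit Arguments. Unset Strict Implicit. Unset Printing Implicit Defensive.
Import GRing.Theory Num.Theory.
Local Open Scope ring_scope.

(* Coordinates (fixed bases):
   R = F^3 (basis e_r), V = F^4 (basis e_v), Vdual with dual basis e^v,
   W = F^4 (basis f_w).  Matrices act on ROW vectors (mathcomp convention).
   - phi : R (x) V -> W is given by phi r : 'M_4 (rows v, columns w),
           phi(e_r (x) e_v) = sum_w (phi r) v w f_w.
   - psi : W -> Vdual is a 'M_4 (rows w, columns v), psi f_w = sum_v psi w v e^v.
   - psi' : Vdual -> W is a 'M_4 (rows v, columns w).
   A point of T x P(Hom(W,Vdual)) x P(Hom(Vdual,W)) is represented by a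
   triple of nonzero representatives; all conditions below are invariant
   under rescaling of each component. *)

Definition triple (F : fieldType) := (('I_3 -> 'M[F]_4) * 'M[F]_4 * 'M[F]_4)%type.

Definition tphi (F : fieldType) (x : triple F) := x.1.1.
Definition tpsi (F : fieldType) (x : triple F) := x.1.2.
Definition tpsi' (F : fieldType) (x : triple F) := x.2.

Definition nonzero_rep (F : fieldType) (x : triple F) :=
  [/\ exists r, tphi x r != 0, tpsi x != 0 & tpsi' x != 0].

(* the defining conditions of F:
   - R (x) V (x) V -> C factors through R (x) S^2 V : each matrix
     (phi r) *m psi (entries sum_w phi_{r v w} psi_{w u}) is symmetric;
   - R (x) W^ (x) W^ -> C factors through R (x) S^2 W^ : each matrix
     (phi r)^T *m psi' (entries sum_v phi_{r v w} psi'_{v y}) is symmetric;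
   - psi' o psi = lambda 1_W   (matrix psi *m psi', row convention);
   - psi o psi' = mu 1_Vdual   (matrix psi' *m psi). *)
Definition inF (F : fieldType) (x : triple F) :=
  [/\ nonzero_rep x,
      forall r, (tphi x r *m tpsi x)^T = tphi x r *m tpsi x,
      forall r, ((tphi x r)^T *m tpsi' x)^T = (tphi x r)^T *m tpsi' x,
      exists lam : F, tpsi x *m tpsi' x = lam%:M
    & exists mu : F, tpsi' x *m tpsi x = mu%:M].

Definition in_stratum (F : fieldType) (i : nat) (x : triple F) :=
  inF x /\
  (if i == 4%N then tpsi x \in unitmx
   else (\rank (tpsi x) == i) && (\rank (tpsi' x) == (4 - i)%N)).

(* action of (h, g) in GL(W) x GL(R) on representatives:
   phi |-> h o phi o (g (x) 1),  psi |-> psi o h^-1,  psi' |-> h o psi'. *)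
Definition act (F : fieldType) (h : 'M[F]_4) (g : 'M[F]_3) (x : triple F) : triple F :=
  (fun r => (\sum_(s < 3) g r s *: tphi x s) *m h,
   invmx h *m tpsi x, tpsi' x *m h).

Definition proj_eq (F : fieldType) (x y : triple F) :=
  exists a b c : F, [/\ a != 0, b != 0 & c != 0] /\
    [/\ (forall r, tphi y r = a *: tphi x r), tpsi y = b *: tpsi x
       & tpsi' y = c *: tpsi' x].

Definition trivial_stabilizer (F : fieldType) (x : triple F) :=
  forall (h : 'M[F]_4) (g : 'M[F]_3), h \in unitmx -> g \in unitmx ->
    proj_eq (act h g x) x ->
    (exists a : F, h = a%:M) /\ (exists b : F, g = b%:M).

Definition coords (F : fieldType) (x : triple F) (k : 'I_80) : F :=
  if (k < 48)%N then
    tphi x (inord (k %/ 16)) (inord ((k %% 16) %/ 4)) (inord (k %% 4))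
  else if (k < 64)%N then
    tpsi x (inord ((k - 48) %/ 4)) (inord ((k - 48) %% 4))
  else tpsi' x (inord ((k - 64) %/ 4)) (inord ((k - 64) %% 4)).

Definition poly80 (F : fieldType) := mpoly.mpoly 80 F.
Definition peval (F : fieldType) (p : poly80 F) (x : triple F) : F := mpoly.meval (coords x) p.

Definition CC (R : realType) : fieldType := R[i].

(* Main.v *)
Require Import Defs.
From HB Require Import structures.
From mathcomp Require Import all_boot all_order all_algebra.
From mathcomp Require Import reals.
From mathcomp Require Import complex.
From mathcomp Require Import mpoly.
From mathcomp Require Import zify.
Set Implicit Arguments. Unset Strict Implicit. Unset Printing Implicit Defensive.
Import GRing.Theory Num.Theory.
Local Open Scope ring_scope.
Lemma indep3 (F : fieldType) (Q : 'I_3 -> 'M[F]_4) (pos : 'I_3 -> 'I_4 * 'I_4)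
   (c : 'I_3 -> F) :
  \det (\matrix_(s, j) Q s (pos j).1 (pos j).2) != 0 ->
  \sum_s c s *: Q s = 0 -> forall s, c s = 0.
Proof.
move=> hN hs.
set N := \matrix_(s, j) _ in hN.
have uN : N \in unitmx by rewrite unitmxE unitfE.
have h0 : (\row_s c s) *m N = 0.
  apply/matrixP => i j; rewrite !mxE.
  apply: etrans (_ : _ = (\sum_s c s *: Q s) (pos j).1 (pos j).2) _;
    last by rewrite hs mxE.
  by rewrite summxE; apply: eq_bigr => s _; rewrite !mxE.
have : \row_s c s = 0 by rewrite -(mulmxK uN (\row_s c s)) h0 mul0mx.
by move/matrixP => H s; have := H 0 s; rewrite !mxE.
Qed.

Lemma finish (F : fieldType) (x : triple F) (h : 'M[F]_4) (g : 'M[F]_3) (a d : F) :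
  \det (tphi x 0) != 0 -> a * d != 0 ->
  (forall r s, g r s = d * (r == s)%:R) ->
  (forall r, tphi x r = a *: ((\sum_s g r s *: tphi x s) *m h)) ->
  (exists a, h = a%:M) /\ (exists b, g = b%:M).
Proof.
move=> hdet had hg Ephi.
have hsum r : \sum_s g r s *: tphi x s = d *: tphi x r.
  rewrite (bigD1 r) //= big1 ?addr0; first by rewrite hg eqxx mulr1.
  by move=> s /negbTE ns; rewrite hg eq_sym ns mulr0 scale0r.
split; last by exists d; apply/matrixP => r s; rewrite hg mxE mulr_natr.
have u0 : tphi x 0 \in unitmx by rewrite unitmxE unitfE.
exists (a * d)^-1.
have E := Ephi 0; rewrite hsum -scalemxAl scalerA in E.
have E2 : tphi x 0 *m h = tphi x 0 *m (a * d)^-1%:M.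
  by rewrite mul_mx_scalar {2}E scalerA mulVf // scale1r.
by rewrite -(mulKmx u0 h) E2 mulKmx.
Qed.

Lemma actE (F : fieldType) h g (x : triple F) r :
  tphi (act h g x) r = (\sum_s g r s *: tphi x s) *m h.
Proof. by []. Qed.

Lemma trivA (F : fieldType) (x : triple F) (pos : 'I_3 -> 'I_4 * 'I_4) :
  \det (tphi x 0) != 0 ->
  \det (\matrix_(s, j) (tphi x s *m tpsi x) (pos j).1 (pos j).2) != 0 ->
  trivial_stabilizer x.
Proof.
move=> hdet hN h g hu gu [a [b [c [[a0 b0 c0] [Ephi Epsi Epsi']]]]].
have {}Ephi r : tphi x r = a *: ((\sum_s g r s *: tphi x s) *m h) by rewrite -actE.
have hpsi : h *m tpsi x = b *: tpsi x.
  by rewrite {1}Epsi /= -scalemxAr mulmxA mulmxV // mul1mx.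
have ab0 : a * b != 0 by rewrite mulf_neq0.
have hg r s : g r s = (a * b)^-1 * (r == s)%:R.
  have E : tphi x r *m tpsi x = (a * b) *: \sum_s g r s *: (tphi x s *m tpsi x).
    rewrite {1}(Ephi r) -scalemxAl -mulmxA hpsi scalemxAr scalerA mulmx_suml.
    rewrite scaler_sumr; apply: eq_bigr => s' _.
    by rewrite -scalemxAl -scalemxAr !scalerA mulrC.
  have H0 : \sum_s (a * b * g r s - (r == s)%:R) *: (tphi x s *m tpsi x) = 0.
    under eq_bigr do rewrite scalerBl -scalerA.
    rewrite sumrB -scaler_sumr -E (bigD1 r) //= eqxx scale1r big1 ?addr0 ?subrr //.
    by move=> s' /negbTE ns; rewrite eq_sym ns scale0r.
  have := @indep3 F (fun s => tphi x s *m tpsi x) pos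
     (fun s => a * b * g r s - (r == s)%:R) hN H0 s.
  move/eqP; rewrite subr_eq0 => /eqP E1.
  by rewrite -E1 mulrA mulVf // mul1r.
by apply: (@finish F x h g a (a * b)^-1) => //; rewrite mulf_neq0 // invr_eq0.
Qed.

Lemma trivB (F : fieldType) (x : triple F) (pos : 'I_3 -> 'I_4 * 'I_4) :
  (forall r, ((tphi x r)^T *m tpsi' x)^T = (tphi x r)^T *m tpsi' x) ->
  \det (tphi x 0) != 0 ->
  \det (\matrix_(s, j) ((tpsi' x)^T *m tphi x s) (pos j).1 (pos j).2) != 0 ->
  trivial_stabilizer x.
Proof.
move=> hsym hdet hN h g hu gu [a [b [c [[a0 b0 c0] [Ephi Epsi Epsi']]]]].
have {}Ephi r : tphi x r = a *: ((\sum_s g r s *: tphi x s) *m h) by rewrite -actE.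
have hpsi : tpsi' x *m h = c^-1 *: tpsi' x.
  by rewrite {2}Epsi' /= scalerA mulVf // scale1r.
have hQ s : (tpsi' x)^T *m tphi x s = (tphi x s)^T *m tpsi' x.
  by rewrite -hsym trmx_mul trmxK.
have hQh s : (tpsi' x)^T *m tphi x s *m h = c^-1 *: ((tpsi' x)^T *m tphi x s).
  by rewrite hQ -mulmxA hpsi scalemxAr.
have ac0 : a / c != 0 by rewrite mulf_neq0 // invr_eq0.
have hg r s : g r s = (a / c)^-1 * (r == s)%:R.
  have E : (tpsi' x)^T *m tphi x r =
      (a / c) *: \sum_s g r s *: ((tpsi' x)^T *m tphi x s).
    rewrite {1}(Ephi r) -scalemxAr mulmxA mulmx_sumr mulmx_suml.
    rewrite !scaler_sumr; apply: eq_bigr => s' _.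
    rewrite -scalemxAr -scalemxAl hQh !scalerA; congr (_ *: _).
    by rewrite mulrAC.
  have H0 : \sum_s (a / c * g r s - (r == s)%:R) *: ((tpsi' x)^T *m tphi x s) = 0.
    under eq_bigr do rewrite scalerBl -scalerA.
    rewrite sumrB -scaler_sumr -E (bigD1 r) //= eqxx scale1r big1 ?addr0 ?subrr //.
    by move=> s' /negbTE ns; rewrite eq_sym ns scale0r.
  have := @indep3 F (fun s => (tpsi' x)^T *m tphi x s) pos
     (fun s => a / c * g r s - (r == s)%:R) hN H0 s.
  move/eqP; rewrite subr_eq0 => /eqP E1.
  by rewrite -E1 mulrA mulVf // mul1r.
by apply: (@finish F x h g a (a / c)^-1) => //; rewrite mulf_neq0 // invr_eq0.
Qed.

Definition ixphi (r : 'I_3) (v w : 'I_4) : 'I_80 := inord (r * 16 + v * 4 + w).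
Definition ixpsi (v w : 'I_4) : 'I_80 := inord (48 + v * 4 + w).
Definition ixpsi' (v w : 'I_4) : 'I_80 := inord (64 + v * 4 + w).

Lemma divmod4 (v w : 'I_4) : ((v * 4 + w) %/ 4 = v /\ (v * 4 + w) %% 4 = w)%N.
Proof. by rewrite divnMDl // modnMDl !(divn_small, modn_small) ?addn0. Qed.

Lemma coords_phi (F : fieldType) (x : triple F) r v w :
  coords x (ixphi r v w) = tphi x r v w.
Proof.
have hr := ltn_ord r; have hv := ltn_ord v; have hw := ltn_ord w.
rewrite /coords /ixphi inordK; last by lia.
have -> : (r * 16 + v * 4 + w < 48)%N by lia.
have -> : ((r * 16 + v * 4 + w) %/ 16 = r)%N by lia.
have -> : (((r * 16 + v * 4 + w) %% 16) %/ 4 = v)%N by lia.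
have -> : ((r * 16 + v * 4 + w) %% 4 = w)%N by lia.
by rewrite !inord_val.
Qed.

Lemma coords_psi (F : fieldType) (x : triple F) v w :
  coords x (ixpsi v w) = tpsi x v w.
Proof.
have hv := ltn_ord v; have hw := ltn_ord w.
rewrite /coords /ixpsi inordK; last by lia.
have -> : (48 + v * 4 + w < 48)%N = false by lia.
have -> : (48 + v * 4 + w < 64)%N by lia.
rewrite -addnA addKn.
by case: (divmod4 v w) => -> ->; rewrite !inord_val.
Qed.

Lemma coords_psi' (F : fieldType) (x : triple F) v w :
  coords x (ixpsi' v w) = tpsi' x v w.
Proof.
have hv := ltn_ord v; have hw := ltn_ord w.
rewrite /coords /ixpsi' inordK; last by lia.
have -> : (64 + v * 4 + w < 48)%N = false by lia.
have -> : (64 + v * 4 + w < 64)%N = false by lia.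
rewrite -addnA addKn.
by case: (divmod4 v w) => -> ->; rewrite !inord_val.
Qed.

Definition pA (F : fieldType) (pos : 'I_3 -> 'I_4 * 'I_4) : poly80 F :=
  \det (\matrix_(v, w) 'X_(ixphi 0 v w)) *
  \det (\matrix_(s, j) \sum_u 'X_(ixphi s (pos j).1 u) * 'X_(ixpsi u (pos j).2)).

Definition pB (F : fieldType) (pos : 'I_3 -> 'I_4 * 'I_4) : poly80 F :=
  \det (\matrix_(v, w) 'X_(ixphi 0 v w)) *
  \det (\matrix_(s, j) \sum_u 'X_(ixpsi' u (pos j).1) * 'X_(ixphi s u (pos j).2)).

Lemma pA_eval (F : fieldType) pos (x : triple F) :
  peval (pA F pos) x = \det (tphi x 0) *
     \det (\matrix_(s, j) (tphi x s *m tpsi x) (pos j).1 (pos j).2).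
Proof.
rewrite /peval /pA rmorphM -!det_map_mx; congr (_ * _); congr (\det _);
  apply/matrixP => i j; rewrite !mxE ?rmorph_sum.
  by rewrite -coords_phi; apply: mevalXU.
by apply: eq_bigr => u _; rewrite rmorphM -coords_phi -coords_psi; congr (_ * _); apply: mevalXU.
Qed.

Lemma pB_eval (F : fieldType) pos (x : triple F) :
  peval (pB F pos) x = \det (tphi x 0) *
     \det (\matrix_(s, j) ((tpsi' x)^T *m tphi x s) (pos j).1 (pos j).2).
Proof.
rewrite /peval /pB rmorphM -!det_map_mx; congr (_ * _); congr (\det _);
  apply/matrixP => i j; rewrite !mxE ?rmorph_sum.
  by rewrite -coords_phi; apply: mevalXU.
by apply: eq_bigr => u _; rewrite !mxE rmorphM -coords_phi -coords_psi'; congr (_ * _); apply: mevalXU.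
Qed.

Definition phiW (F : fieldType) (p q : nat) (r : 'I_3) : 'M[F]_4 :=
  \matrix_(u, v) (if (val r == 0)%N then (val u == val v)
     else if (val r == 1)%N then ((val u == p) && (val v == q)) || ((val u == q) && (val v == p))
     else (val u == q) && (val v == q))%:R.

Lemma mul_pidE (F : fieldType) (A : 'M[F]_4) i u v :
  (A *m pid_mx i) u v = A u v * (v < i)%:R.
Proof.
rewrite mxE (bigD1 v) //= big1 ?addr0 => [|w /negbTE nw]; rewrite mxE.
  by rewrite eqxx.
by rewrite (_ : (val w == val v) = false) ?mulr0 //; apply/negbTE; rewrite -(inj_eq val_inj) nw.
Qed.

Lemma mul_copidE (F : fieldType) (A : 'M[F]_4) i u v :
  (A *m copid_mx i) u v = A u v * (i <= v)%:R.
Proof.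
have oppE (B : 'M[F]_4) : (- B) u v = - B u v by rewrite mxE.
rewrite /copid_mx mulmxBr mulmx1 mxE oppE mul_pidE.
by case: (ltnP v i) => _; rewrite ?mulr1 ?mulr0 ?subrr ?subr0.
Qed.

Lemma pos_entry (F : fieldType) (A : 'M[F]_4) (psi : 'M[F]_4) u v :
  ((A^T *m psi)^T) u v = (psi^T *m A) u v.
Proof. by rewrite trmx_mul trmxK. Qed.

Ltac brute3 s u v :=
  case: s => [[|[|[|s]]] hs] //; case: u => [[|[|[|[|u]]]] hu] //;
  case: v => [[|[|[|[|v]]]] hv] //=; rewrite ?mulr0 ?mul0r ?mulr1 ?mul1r //.

Lemma symW1 (F : fieldType) p q i s :
  (p, q, i) \in [:: (1, 2, 1); (0, 1, 2); (0, 1, 3); (0, 1, 4)]%N ->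
  (phiW F p q s *m pid_mx i)^T = phiW F p q s *m pid_mx i.
Proof.
move=> hin; apply/matrixP => u v; rewrite mxE !mul_pidE !mxE.
move: hin; rewrite !inE => /or4P [] /eqP [-> -> ->]; brute3 s u v.
Qed.

Lemma symW2 (F : fieldType) p q i s :
  (p, q, i) \in [:: (1, 2, 1); (0, 1, 2); (0, 1, 3); (0, 1, 0)]%N ->
  ((phiW F p q s)^T *m copid_mx i)^T = (phiW F p q s)^T *m copid_mx i.
Proof.
move=> hin; apply/matrixP => u v; rewrite mxE !mul_copidE !mxE.
move: hin; rewrite !inE => /or4P [] /eqP [-> -> ->]; brute3 s u v.
Qed.

Definition o4 (n : nat) (h : (n < 4)%N) : 'I_4 := Ordinal h.
Definition posW (p q : 'I_4) (j : 'I_3) : 'I_4 * 'I_4 :=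
  if (val j == 0)%N then (p, p) else if (val j == 1)%N then (p, q) else (q, q).

Lemma copidT_mulE (F : fieldType) (A : 'M[F]_4) i u v :
  ((copid_mx i)^T *m A) u v = A u v * (i <= u)%:R.
Proof. by rewrite -pos_entry mxE mul_copidE mxE. Qed.

Lemma det3_trig (F : fieldType) (N : 'M[F]_3) :
  (forall s j : 'I_3, (j < s)%N -> N s j = 0) ->
  (forall s, N s s = 1) -> \det N = 1.
Proof.
move=> h0 h1; rewrite -det_tr det_trig.
  by rewrite big1 // => k _; rewrite mxE h1.
by apply/is_trig_mxP => i j lt; rewrite mxE h0.
Qed.

Lemma detA (F : fieldType) i : (i \in [:: 2; 3; 4])%N ->
  \det (\matrix_(s, j) (phiW F 0 1 s *m pid_mx i)
     (posW (o4 (isT : (0 < 4)%N)) (o4 (isT : (1 < 4)%N)) j).1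
     (posW (o4 (isT : (0 < 4)%N)) (o4 (isT : (1 < 4)%N)) j).2) = 1.
Proof.
move=> hi; apply: det3_trig; last first.
  move=> s; rewrite mxE mul_pidE !mxE.
  by move: hi; rewrite !inE => /or3P [] /eqP ->; case: s => [[|[|[|s]]] hs] //=; rewrite mulr1.
move=> s j; rewrite mxE mul_pidE !mxE.
by case: s => [[|[|[|s]]] hs] //; case: j => [[|[|[|j]]] hj] //= _; rewrite mul0r.
Qed.

Lemma detB (F : fieldType) :
  \det (\matrix_(s, j) ((copid_mx 1)^T *m phiW F 1 2 s)
     (posW (o4 (isT : (1 < 4)%N)) (o4 (isT : (2 < 4)%N)) j).1
     (posW (o4 (isT : (1 < 4)%N)) (o4 (isT : (2 < 4)%N)) j).2) = 1.
Proof.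
apply: det3_trig; last first.
  by move=> s; rewrite mxE copidT_mulE !mxE; case: s => [[|[|[|s]]] hs] //=; rewrite mulr1.
move=> s j; rewrite mxE copidT_mulE !mxE.
by case: s => [[|[|[|s]]] hs] //; case: j => [[|[|[|j]]] hj] //= _; rewrite mul0r.
Qed.

Lemma phiW0 (F : fieldType) p q : phiW F p q 0 = 1%:M.
Proof. by apply/matrixP => u v; rewrite !mxE. Qed.

Lemma det_phiW0 (F : fieldType) p q : \det (phiW F p q 0) = 1.
Proof. by rewrite phiW0 det1. Qed.

Lemma neq0_entry (F : fieldType) (A : 'M[F]_4) u v : A u v != 0 -> A != 0.
Proof. by apply: contra => /eqP ->; rewrite mxE. Qed.

Lemma scalar0 (F : fieldType) : (0 : F)%:M = 0 :> 'M[F]_4.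
Proof. by rewrite -scalemx1 scale0r. Qed.

Definition wit (F : fieldType) (p q i j : nat) : triple F :=
  (phiW F p q, pid_mx i, copid_mx j).

Lemma wit_inF (F : fieldType) p q i :
  (p, q, i) \in [:: (1, 2, 1); (0, 1, 2); (0, 1, 3)]%N ->
  in_stratum i (wit F p q i i).
Proof.
move=> hin.
have hi : (0 < i < 4)%N by move: hin; rewrite !inE => /or3P [] /eqP [_ _ ->].
case/andP: hi => hi0 hi4.
split; last first.
  rewrite /tpsi /tpsi' /wit /= (_ : (i == 4)%N = false); last by case: ltngtP hi4.
  rewrite rank_pid_mx ?rank_copid_mx ?eqxx //; exact: ltnW.
split.
- split.
  + by exists 0; rewrite /tphi /= phiW0; apply: (@neq0_entry _ _ 0 0); rewrite mxE eqxx mulr1n oner_neq0.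
  + rewrite /tpsi /wit /=; apply: (@neq0_entry _ _ 0 0); rewrite mxE /= hi0; exact: oner_neq0.
  + rewrite /tpsi' /wit /=; apply: (@neq0_entry _ _ 3 3); rewrite /copid_mx !mxE /=.
    by rewrite (_ : (3 < i)%N = false) ?subr0 ?oner_neq0 //; case: ltngtP hi4.
- by move=> r; apply: symW1; move: hin; rewrite !inE => /or3P [] /eqP [-> -> ->].
- by move=> r; apply: symW2; move: hin; rewrite !inE => /or3P [] /eqP [-> -> ->].
- by exists 0; rewrite scalar0 /tpsi /tpsi' /= mul_pid_mx_copid // ltnW.
- by exists 0; rewrite scalar0 /tpsi /tpsi' /= mul_copid_mx_pid // ltnW.
Qed.

Lemma wit4_inF (F : fieldType) : in_stratum 4 (wit F 0 1 4 0).
Proof.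
have e1 : pid_mx 4 = 1%:M :> 'M[F]_4 by rewrite pid_mx_1.
have e2 : copid_mx 0 = 1%:M :> 'M[F]_4.
  by apply/matrixP => u v; rewrite /copid_mx !mxE /= andbF subr0.
split; last by rewrite /tpsi /wit /= e1 unitmx1.
split.
- split.
  + by exists 0; rewrite /tphi /= phiW0; apply: (@neq0_entry _ _ 0 0); rewrite mxE eqxx mulr1n oner_neq0.
  + rewrite /tpsi /wit /= e1; apply: (@neq0_entry _ _ 0 0); rewrite mxE eqxx mulr1n; exact: oner_neq0.
  + rewrite /tpsi' /wit /= e2; apply: (@neq0_entry _ _ 0 0); rewrite mxE eqxx mulr1n; exact: oner_neq0.
- by move=> r; apply: symW1; rewrite !inE eqxx ?orbT.
- by move=> r; apply: symW2; rewrite !inE eqxx ?orbT.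
- by exists 1; rewrite /tpsi /tpsi' /wit /= e1 e2 mulmx1.
- by exists 1; rewrite /tpsi /tpsi' /wit /= e1 e2 mulmx1.
Qed.

Theorem mainTheorem8 (R : realType) (i : nat) :
  (1 <= i <= 4)%N ->
  exists p : poly80 (CC R),
    (exists x : triple (CC R), in_stratum i x /\ peval p x != 0) /\
    (forall x : triple (CC R), in_stratum i x -> peval p x != 0 ->
       trivial_stabilizer x).
Proof.
case/andP => h1 h4.
have HA pos : forall x : triple (CC R), peval (pA (CC R) pos) x != 0 -> trivial_stabilizer x.
  by move=> x; rewrite pA_eval mulf_eq0 negb_or => /andP [d1 d2]; exact: trivA d2.
case: i h1 h4 => [|[|[|[|[|i]]]]] // _ _.
- exists (pB (CC R) (posW (o4 (isT : (1 < 4)%N)) (o4 (isT : (2 < 4)%N)))); split.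
    exists (wit (CC R) 1 2 1 1); split; first exact: wit_inF.
    by rewrite pB_eval (det_phiW0 (CC R)) (detB (CC R)) mulr1 oner_neq0.
  move=> x [[_ _ hsym _ _] _]; rewrite pB_eval mulf_eq0 negb_or => /andP [d1 d2].
  exact: trivB hsym d1 d2.
- exists (pA (CC R) (posW (o4 (isT : (0 < 4)%N)) (o4 (isT : (1 < 4)%N)))); split => [|x _]; last exact: HA.
  exists (wit (CC R) 0 1 2 2); split; first exact: wit_inF.
  by rewrite pA_eval (det_phiW0 (CC R)) (detA (CC R) (isT : (2 \in [:: 2; 3; 4])%N)) mulr1 oner_neq0.
- exists (pA (CC R) (posW (o4 (isT : (0 < 4)%N)) (o4 (isT : (1 < 4)%N)))); split => [|x _]; last exact: HA.
  exists (wit (CC R) 0 1 3 3); split; first exact: wit_inF.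
  by rewrite pA_eval (det_phiW0 (CC R)) (detA (CC R) (isT : (3 \in [:: 2; 3; 4])%N)) mulr1 oner_neq0.
- exists (pA (CC R) (posW (o4 (isT : (0 < 4)%N)) (o4 (isT : (1 < 4)%N)))); split => [|x _]; last exact: HA.
  exists (wit (CC R) 0 1 4 0); split; first exact: wit4_inF.
  by rewrite pA_eval (det_phiW0 (CC R)) (detA (CC R) (isT : (4 \in [:: 2; 3; 4])%N)) mulr1 oner_neq0.
Qed.
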